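(* In the transactional panorama model described in the context, for any view graph, any (sequence of) write transactions in any state of computation, and any sequence of read transactions, it is always possible to answer the read transactions so that any chosen two of the three properties monotonicity, visibility, and consistency-minimal hold.
   Context: A view graph is a directed acyclic graph on a fixed set $N$ of nodes (source data and views); there is an edge $n_j \to n_i$ if view $n_i$ takes $n_j$ as input, and the dependents of a node are the nodes reachable from it. The view graph is multi-versioned. Write transactions $w^{t_1},\dots,w^{t_n}$ (timestamps $t_1<\dots<t_n$, starting from an initial version $G^{t_0}$) each modify some source nodes and must recompute their dependents; they are processed one at a time in timestamp order. Write transaction $w^{t_i}$ creates version $G^{t_i}=(E,N,V^{t_i})$, where for each node $n_k$ the set $V^{t_i}$ contains: the result $v_k^{t_i}$ if $w^{t_i}$ updates $n_k$ and has already computed it; a placeholder $UC_k^{t_i}$ (''under computation'') if $w^{t_i}$ updates $n_k$ but has not yet computed it; or the result of $n_k$ from the previous version if $w^{t_i}$ does not update $n_k$. A committed version contains no UCs. The timestamp of a returned state is the timestamp of the version it belongs to. Read transactions $r^{s_1},\dots,r^{s_m}$ ($s_1<\dots<s_m$) each read the set of views in the user's current viewport (a subset of $N$, which may change between reads) and return immediately, without waiting, a set $H^{s_i}$ containing one state (a view result or a UC) per view read. Monotonicity: for any view $n_k$ read by two transactions $r^{s_i}, r^{s_j}$ with $s_i<s_j$, returning states with timestamps $t_p$ and $t_q$, we have $t_p \le t_q$. Visibility: no $H^{s_i}$ contains a UC. Consistency: for each $r^{s_i}$ there is a version $G^{t_j}=(E,N,V^{t_j})$ with $t_j\le s_i$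 and $H^{s_i}\subseteq V^{t_j}$. Consistency-minimal: consistency holds and each read transaction returns the states (restricted to its views) of the most recent version of the view graph among those that minimize the number of UCs returned for that transaction (the minimization being over the versions permitted by the other properties that are required). *)

(* Defs.v *)
From mathcomp Require Import all_boot.
Set Implicit Arguments. Unset Strict Implicit. Unset Printing Implicit Defensive.

(* (edge x -> y means view y takes x as input).                       *)

Definition acyclic (N : finType) (E : rel N) : Prop :=
  forall x y, E x y -> ~~ connect E y x.

Definition source (N : finType) (E : rel N) (x : N) : bool :=
  [forall y, ~~ E y x].

(* Write transaction number j (1 <= j <= n, timestamp t j) modifies the
   source nodes S j; it updates these and all their dependents, i.e. all
   nodes reachable from S j. *)
Definition updated (N : finType) (E : rel N) (S : nat -> {set N}) (j : nat)
  : {set N} := [set y | [exists x in S j, connect E x y]].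

(* States returned by reads: the result of node k computed by the write of
   index j (index 0 = initial version G^{t_0}), or a UC placeholder of node
   k for write j. *)
Inductive state (N : Type) :=
  | Val of N & nat
  | UC of N & nat.

Definition is_UC (N : Type) (x : state N) : bool :=
  if x is UC _ _ then true else false.

(* [prog i j k] : at the moment of the i-th read, write transaction j has
   already computed node k.  [entry U prog i j k] is the entry of node k in
   version G^{t_j} at the moment of the i-th read (the set V^{t_j}). *)
Fixpoint entry (N : finType) (U : nat -> {set N} ) (prog : nat -> nat -> N -> bool)
  (i j : nat) (k : N) {struct j} : state N :=
  match j with
  | 0 => Val k 0
  | j'.+1 => if k \in U j then (if prog i j k then Val k j else UC k j)
             else entry U prog i j' k
  end.

(* Answers to read transactions.  [ans i k] is the index j of the      *)
(* version whose state for view k is returned by the i-th read; the    *)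
(* returned state is [entry U prog i (ans i k) k] and its timestamp is *)
(* t (ans i k).                                                        *)

Section Props.
Variables (N : finType) (U : nat -> {set N}) (prog : nat -> nat -> N -> bool)
  (n : nat) (t : nat -> nat) (m : nat) (s : nat -> nat) (vp : nat -> {set N})
  (ans : nat -> N -> nat).

(* the returned states come from versions existing at the read time *)
Definition well_formed : Prop :=
  forall i k, i < m -> k \in vp i -> ans i k <= n /\ t (ans i k) <= s i.

Definition monotonicity : Prop :=
  forall i i' k, i < i' -> i' < m -> k \in vp i -> k \in vp i' ->
    t (ans i k) <= t (ans i' k).

Definition visibility : Prop :=
  forall i k, i < m -> k \in vp i -> ~~ is_UC (entry U prog i (ans i k) k).

Definition consistency : Prop :=
  forall i, i < m -> exists j, [/\ j <= n, t j <= s i &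
    forall k, k \in vp i -> entry U prog i (ans i k) k = entry U prog i j k].

Definition nUC (i j : nat) : nat :=
  #|[set k in vp i | is_UC (entry U prog i j k)]|.

(* versions that read i may return given the other required properties
   (monotonicity w.r.t. the previous reads if [reqM], visibility if [reqV]) *)
Definition permitted (reqM reqV : bool) (i j : nat) : Prop :=
  [/\ j <= n, t j <= s i,
      reqM -> forall i' k, i' < i -> k \in vp i' -> k \in vp i ->
                t (ans i' k) <= t j
    & reqV -> forall k, k \in vp i -> ~~ is_UC (entry U prog i j k)].

Definition consistency_minimal (reqM reqV : bool) : Prop :=
  forall i, i < m -> exists js, [/\ permitted reqM reqV i js,
     forall k, k \in vp i -> ans i k = js
   & forall j, permitted reqM reqV i j ->
       nUC i js <= nUC i j /\ (nUC i j = nUC i js -> j <= js)].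

End Props.

(* Main.v *)
From Stdlib Require Import ClassicalEpsilon.
Require Import Defs.
From mathcomp Require Import all_boot.
Set Implicit Arguments. Unset Strict Implicit.

Lemma best_exists (P : nat -> Prop) (f : nat -> nat) (n : nat) :
  (exists j, P j) -> (forall j, P j -> j <= n) ->
  exists js, P js /\ forall j, P j -> f js <= f j /\ (f j = f js -> j <= js).
Proof.
move=> ex bnd.
pose pb j := if excluded_middle_informative (P j) then true else false.
have pbP j : reflect (P j) (pb j).
  by rewrite /pb; case: excluded_middle_informative => h; constructor.
have ordj j : P j -> j < n.+1 by move=> Pj; rewrite ltnS; exact: bnd.
have exv : exists v, [exists j : 'I_n.+1, pb j && (f j == v)].
  case: ex => j Pj; exists (f j); apply/existsP; exists (Ordinal (ordj j Pj)).
  by rewrite /= (introT (pbP j) Pj) eqxx.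
case: (ex_minnP exv) => v /existsP [j0 /andP [pj0 /eqP fj0]] vmin.
have exj : exists j, pb j && (f j == v) by exists j0; rewrite pj0 fj0 eqxx.
have bj : forall j, pb j && (f j == v) -> j <= n by move=> j /andP [/pbP /bnd].
case: (ex_maxnP exj bj) => js /andP [/pbP Pjs /eqP fjs] jsmax.
exists js; split => // j Pj; split.
  rewrite fjs; apply: vmin; apply/existsP; exists (Ordinal (ordj j Pj)).
  by rewrite /= (introT (pbP j) Pj) eqxx.
by move=> e; apply: jsmax; rewrite (introT (pbP j) Pj) e fjs eqxx.
Qed.

Section Build.
Variables (N : finType) (U : nat -> {set N}) (prog : nat -> nat -> N -> bool)
  (n : nat) (t : nat -> nat) (m : nat) (s : nat -> nat) (vp : nat -> {set N}).

Definition Q (reqM reqV : bool) (a : nat -> nat) (i : nat) : Prop :=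
  permitted U prog n t s vp (fun i k => a i) reqM reqV i (a i) /\
  forall j, permitted U prog n t s vp (fun i k => a i) reqM reqV i j ->
    nUC U prog vp i (a i) <= nUC U prog vp i j /\
    (nUC U prog vp i j = nUC U prog vp i (a i) -> j <= a i).

Lemma permitted_ext reqM reqV (a a' : nat -> nat) i j :
  (forall i', i' < i -> a i' = a' i') ->
  permitted U prog n t s vp (fun i k => a i) reqM reqV i j ->
  permitted U prog n t s vp (fun i k => a' i) reqM reqV i j.
Proof.
move=> e [h1 h2 h3 h4]; split => //.
by move=> hM i' k lt ki ki' /=; rewrite -e //; exact: (h3 hM i' k).
Qed.

Lemma Q_ext reqM reqV (a a' : nat -> nat) i :
  (forall i', i' <= i -> a i' = a' i') -> Q reqM reqV a i -> Q reqM reqV a' i.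
Proof.
move=> e [hp hmin].
have e' : forall i', i' < i -> a' i' = a i' by move=> i' lt; rewrite e // ltnW.
have e'' : forall i', i' < i -> a i' = a' i' by move=> i' lt; rewrite e // ltnW.
split; first by rewrite -e //; exact: permitted_ext e'' hp.
by move=> j hj; have := hmin j (permitted_ext e' hj); rewrite -e.
Qed.

Lemma build reqM reqV :
  (forall a M, M < m -> (forall i, i < M -> Q reqM reqV a i) ->
     exists j, permitted U prog n t s vp (fun i k => a i) reqM reqV M j) ->
  forall M, M <= m -> exists a, forall i, i < M -> Q reqM reqV a i.
Proof.
move=> cand; elim=> [|M IH] hM; first by exists (fun _ => 0).
have [a ha] := IH (ltnW hM).
have [j0 hj0] := cand a M hM ha.
have [js [Pjs minjs]] := @best_exists
  (fun j => permitted U prog n t s vp (fun i k => a i) reqM reqV M j)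
  (fun j => nUC U prog vp M j) n
  (ex_intro _ j0 hj0) (fun j h => let: And4 h1 _ _ _ := h in h1).
exists (fun i => if i < M then a i else js) => i; rewrite ltnS leq_eqVlt.
case/orP => [/eqP ->|lt].
  have e : forall i', i' < M -> a i' = (fun i => if i < M then a i else js) i'
    by move=> i' ->.
  split; rewrite ltnn.
    exact: permitted_ext e Pjs.
  move=> j hj; apply: minjs.
  apply: (permitted_ext (a := fun i => if i < M then a i else js)) hj.
  by move=> i' lt; rewrite lt.
apply: Q_ext (ha i lt) => i' le; by rewrite (leq_ltn_trans le lt).
Qed.

End Build.

Lemma mono_gen (f : nat -> nat) B :
  (forall j, j.+1 < B -> f j <= f j.+1) ->
  forall a b, a <= b -> b < B -> f a <= f b.
Proof.
move=> h a; elim=> [|b IH] ab bB; first by move: ab; rewrite leqn0 => /eqP ->.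
move: ab; rewrite leq_eqVlt => /orP [/eqP -> //|ab].
apply: leq_trans (IH ab (ltnW bB)) (h _ bB).
Qed.

Lemma maxidx (a : nat -> nat) M : 0 < M ->
  exists2 i0, i0 < M & forall i, i < M -> a i <= a i0.
Proof.
elim: M => [//|M IH] _.
case: M IH => [|M] IH.
  by exists 0 => // i; rewrite ltnS leqn0 => /eqP ->.
have [i0 i0M hi0] := IH isT.
have [le|lt] := leqP (a i0) (a M.+1).
  exists M.+1 => // i; rewrite ltnS leq_eqVlt => /orP [/eqP -> //|iM].
  exact: leq_trans (hi0 i iM) le.
exists i0; first exact: ltnW.
move=> i; rewrite ltnS leq_eqVlt => /orP [/eqP -> |iM]; first exact: ltnW.
exact: hi0.
Qed.

Unset Implicit Arguments. Set Strict Implicit.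

Theorem theorem2p7
  (N : finType) (E : rel N) (S : nat -> {set N})
  (n : nat) (t : nat -> nat) (m : nat) (s : nat -> nat)
  (vp : nat -> {set N}) (prog : nat -> nat -> N -> bool)
  (* the view graph is a DAG; writes modify source nodes only *)
  (hE : acyclic E)
  (hS : forall j x, 1 <= j <= n -> x \in S j -> source E x)
  (* write timestamps t_0 < t_1 < ... < t_n, read timestamps s_0 < ... < s_{m-1} *)
  (ht : forall j, j < n -> t j < t j.+1)
  (hs : forall i, i.+1 < m -> s i < s i.+1)
  (* the initial version exists before any read *)
  (h0 : 0 < m -> t 0 <= s 0)
  (* computation progresses monotonically over time *)
  (hprog_mono : forall i i' j k, i <= i' -> prog i j k -> prog i' j k)
  (* a write only computes after it has arrived *)
  (hprog_arr : forall i j k, 1 <= j <= n -> prog i j k -> t j <= s i)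
  (* writes are processed one at a time in timestamp order: if write j has
     computed something, every earlier write j' is committed *)
  (hprog_seq : forall i j j' k k', 1 <= j' -> j' < j -> j <= n ->
      k \in updated E S j -> prog i j k ->
      k' \in updated E S j' -> prog i j' k') :
  let U := updated E S in
  (exists ans, [/\ well_formed n t m s vp ans,
                   monotonicity t m vp ans & visibility U prog m vp ans]) /\
  (exists ans, [/\ well_formed n t m s vp ans,
                   monotonicity t m vp ans &
                   consistency_minimal U prog n t m s vp ans true false]) /\
  (exists ans, [/\ well_formed n t m s vp ans,
                   visibility U prog m vp ans &
                   consistency_minimal U prog n t m s vp ans false true]).
Proof.
move=> U.
have smono : forall a b, a <= b -> b < m -> s a <= s b.
  by apply: mono_gen => j hj; apply: ltnW; apply: hs.
have tmono : forall a b, a <= b -> b <= n -> t a <= t b.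
  move=> a b ab bn; apply: (@mono_gen t n.+1) => // j hj.
  by apply: ltnW; apply: ht.
have t0s : forall i, i < m -> t 0 <= s i.
  move=> i im; apply: leq_trans (h0 (leq_ltn_trans (leq0n i) im)) _.
  exact: smono.
split; [|split].
- exists (fun _ _ => 0); split.
  + by move=> i k im _; split => //; exact: t0s.
  + by move=> *.
  + by move=> *.
- have [a ha] : exists a, forall i, i < m -> @Q N U prog n t s vp true false a i.
    refine (@build N U prog n t m s vp true false _ m (leqnn m)).
    move=> a M hM hQ.
    case: M hM hQ => [|M] hM hQ.
      by exists 0; split => //; exact: h0.
    have [i0 i0M hi0] := maxidx a (ltn0Sn M).
    have [[h1 h2 _ _] _] := hQ i0 i0M.
    exists (a i0); split => //.
      apply: leq_trans h2 _; apply: smono => //; exact: ltnW.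
    move=> _ i' k i'M _ _; apply: tmono => //; exact: hi0.
  exists (fun i k => a i); split.
  + move=> i k im _; have [[h1 h2 _ _] _] := ha i im; by split.
  + move=> i i' k ii' i'm ki ki'.
    have [[_ _ h3 _] _] := ha i' i'm.
    exact: (h3 isT i k).
  + move=> i im; exists (a i); have [hp hmin] := ha i im; by split.
- have [a ha] : exists a, forall i, i < m -> @Q N U prog n t s vp false true a i.
    refine (@build N U prog n t m s vp false true _ m (leqnn m)).
    by move=> a M hM hQ; exists 0; split => //; exact: t0s.
  exists (fun i k => a i); split.
  + move=> i k im _; have [[h1 h2 _ _] _] := ha i im; by split.
  + move=> i k im ki; have [[_ _ _ h4] _] := ha i im; exact: h4.
  + move=> i im; exists (a i); have [hp hmin] := ha i im; by split.
Qed.
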